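(* Let $C\ge 2$ and let $\mathbf{o}_m,\mathbf{o}_n\in\mathbb{R}^C$ be logit vectors with $\mathbf{s}_m=\mathrm{softmax}(\mathbf{o}_m)$, $\mathbf{s}_n=\mathrm{softmax}(\mathbf{o}_n)$. Define the KL loss $$\mathcal{L}_{KL}(\mathbf{o}_m,\mathbf{o}_n)=\sum_{j=1}^C \mathbf{s}_m^j\log\frac{\mathbf{s}_m^j}{\mathbf{s}_n^j}.$$ Fix a point $(\bar{\mathbf{o}}_m,\bar{\mathbf{o}}_n)\in\mathbb{R}^C\times\mathbb{R}^C$, and let $\bar{\mathbf{s}}_m=\mathrm{softmax}(\bar{\mathbf{o}}_m)$, $\bar{\mathbf{w}}^{j,k}=\bar{\mathbf{s}}_m^j\bar{\mathbf{s}}_m^k$, $\overline{\Delta\mathbf{n}}_{j,k}=\bar{\mathbf{o}}_n^j-\bar{\mathbf{o}}_n^k$. For $\alpha,\beta>0$ define the Decoupled KL (DKL) loss (in which the barred quantities are held constant, i.e. are ''stop-gradient'' quantities) $$\mathcal{L}_{DKL}(\mathbf{o}_m,\mathbf{o}_n)=\frac{\alpha}{4}\sum_{j=1}^C\sum_{k=1}^C \bar{\mathbf{w}}^{j,k}\big((\mathbf{o}_m^j-\mathbf{o}_m^k)-\overline{\Delta\mathbf{n}}_{j,k}\big)^2\;-\;\beta\sum_{j=1}^C \bar{\mathbf{s}}_m^j\log \mathrm{softmax}(\mathbf{o}_n)^j .$$ Then, when $\alpha=\beta=1$, at the point $(\mathbf{o}_m,\mathbf{o}_n)=(\bar{\mathbf{o}}_m,\bar{\mathbf{o}}_n)$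 we have $$\nabla_{\mathbf{o}_m}\mathcal{L}_{DKL}=\nabla_{\mathbf{o}_m}\mathcal{L}_{KL},\qquad \nabla_{\mathbf{o}_n}\mathcal{L}_{DKL}=\nabla_{\mathbf{o}_n}\mathcal{L}_{KL}.$$ Since $(\bar{\mathbf{o}}_m,\bar{\mathbf{o}}_n)$ is arbitrary, the KL loss and the DKL loss (with $\alpha=\beta=1$) produce identical gradients at every input.
   Context: $\mathrm{softmax}(\mathbf{o})^j=e^{\mathbf{o}^j}/\sum_{k=1}^C e^{\mathbf{o}^k}$. Superscripts $j,k$ denote coordinates (class indices). The ''stop-gradient'' convention: in $\mathcal{L}_{DKL}$, the weights $\bar{\mathbf{w}}$, the differences $\overline{\Delta\mathbf{n}}$ and the soft labels $\bar{\mathbf{s}}_m$ are evaluated at the point where the gradient is taken and are treated as constants when differentiating. *)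

(* Defs.v *)
From HB Require Import structures.
From mathcomp Require Import all_boot all_order all_algebra.
From mathcomp Require Import all_classical all_reals all_analysis.
Set Implicit Arguments. Unset Strict Implicit. Unset Printing Implicit Defensive.
Import Order.TTheory GRing.Theory Num.Theory.
Local Open Scope ring_scope.

Section Defs.
Variables (R : realType) (C : nat).

Definition softmax (o : 'I_C -> R) (j : 'I_C) : R :=
  expR (o j) / \sum_(k < C) expR (o k).

Definition L_KL (om on : 'I_C -> R) : R :=
  \sum_(j < C) softmax om j * ln (softmax om j / softmax on j).

(* L_DKL with stop-gradient quantities computed from the fixed point (obm, obn):
   w^{j,k} = sbm^j sbm^k, dn_{j,k} = obn^j - obn^k, sbm = softmax obm. *)
Definition L_DKL (alpha beta : R) (obm obn : 'I_C -> R) (om on : 'I_C -> R) : R :=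
  alpha / 4 * \sum_(j < C) \sum_(k < C)
      (softmax obm j * softmax obm k) * ((om j - om k) - (obn j - obn k)) ^+ 2
  - beta * \sum_(j < C) softmax obm j * ln (softmax on j).

Definition shift_coord (o : 'I_C -> R) (i : 'I_C) (t : R) : 'I_C -> R :=
  fun j => o j + (if j == i then t else 0).

End Defs.

(* Main.v *)
Require Import Defs.
From HB Require Import structures.
From mathcomp Require Import all_boot all_order all_algebra.
From mathcomp Require Import all_classical all_reals all_analysis.
From mathcomp Require Import ring.
Import Order.TTheory GRing.Theory Num.Theory.
Local Open Scope ring_scope.

Section W.
Context {R : realType}.
Implicit Types (f g : R -> R) (x a b : R).

Lemma dsum n (h : 'I_n -> R -> R) x (d : 'I_n -> R) :
  (forall j, is_derive x 1 (h j) (d j)) ->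
  is_derive x 1 (fun t => \sum_(j < n) h j t) (\sum_(j < n) d j).
Proof. by move=> H; have := is_derive_sum H; rewrite fct_sumE. Qed.

Lemma dM f g x a b : is_derive x 1 f a -> is_derive x 1 g b ->
  is_derive x 1 (fun t => f t * g t) (f x * b + g x * a).
Proof. by move=> Hf Hg; have := is_deriveM Hf Hg. Qed.

Lemma dD f g x a b : is_derive x 1 f a -> is_derive x 1 g b ->
  is_derive x 1 (fun t => f t + g t) (a + b).
Proof. by move=> Hf Hg; have := is_deriveD Hf Hg. Qed.

Lemma dB f g x a b : is_derive x 1 f a -> is_derive x 1 g b ->
  is_derive x 1 (fun t => f t - g t) (a - b).
Proof. by move=> Hf Hg; have := is_deriveB Hf Hg. Qed.

Lemma dC x (c : R) : is_derive x 1 (fun _ => c) 0.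
Proof. exact: is_derive_cst. Qed.

Lemma dI x : is_derive x 1 (fun t : R => t) 1.
Proof. exact: is_derive_id. Qed.

Lemma dcomp f g x a b : is_derive (g x) 1 f a -> is_derive x 1 g b ->
  is_derive x 1 (fun t => f (g t)) (a * b).
Proof. by move=> Hf Hg; have := is_derive1_comp Hf Hg. Qed.

Lemma dV f x a : f x != 0 -> is_derive x 1 f a ->
  is_derive x 1 (fun t => (f t)^-1) (- (f x) ^- 2 * a).
Proof. by move=> H Hf; have := is_deriveV H Hf. Qed.

Lemma dsq f x a : is_derive x 1 f a ->
  is_derive x 1 (fun t => f t ^+ 2) (2 * f x * a).
Proof. by move=> Hf; have := is_deriveX 2 Hf; rewrite expr1. Qed.

Lemma dexp f x a : is_derive x 1 f a -> is_derive x 1 (fun t => expR (f t)) (expR (f x) * a).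
Proof. move=> Hf; exact: dcomp. Qed.

Lemma dln f x a : 0 < f x -> is_derive x 1 f a -> is_derive x 1 (fun t => ln (f t)) ((f x)^-1 * a).
Proof. move=> H Hf; apply: dcomp => //; exact: is_derive1_ln. Qed.
End W.
Arguments dsum {R n h x d}. Arguments dM {R f g x a b}. Arguments dD {R f g x a b}.
Arguments dB {R f g x a b}. Arguments dcomp {R f g x a b}. Arguments dV {R f x a}.
Arguments dsq {R f x a}. Arguments dexp {R f x a}. Arguments dln {R f x a}.

Section S.
Variables (R : realType) (C : nat) (o : 'I_C -> R) (i : 'I_C).
Definition e (j : 'I_C) : R := if j == i then 1 else 0.
Definition Z (t : R) := \sum_(k < C) expR (shift_coord o i t k).

Lemma shift0 : shift_coord o i 0 = o.
Proof. by apply/funext => j; rewrite /shift_coord; case: ifP => _; rewrite addr0. Qed.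

Lemma sum_e (F : 'I_C -> R) : \sum_(k < C) F k * e k = F i.
Proof.
rewrite (bigD1 i) //= /e eqxx mulr1 big1 ?addr0 // => k /negPf ->.
by rewrite mulr0.
Qed.

Lemma Zpos (p : 'I_C -> R) : 0 < \sum_(k < C) expR (p k).
Proof.
rewrite (bigD1 i) //=; apply: (lt_le_trans (expR_gt0 (p i))).
by rewrite lerDl; apply: sumr_ge0 => k _; apply/ltW/expR_gt0.
Qed.

Lemma sum_softmax (p : 'I_C -> R) : \sum_(j < C) softmax p j = 1.
Proof. by rewrite /softmax -mulr_suml mulfV // gt_eqF // Zpos. Qed.

Lemma softmax_gt0 (p : 'I_C -> R) j : 0 < softmax p j.
Proof. by rewrite /softmax divr_gt0 // ?expR_gt0 // Zpos. Qed.

Lemma dg j : is_derive (0:R) (1:R) (fun t => shift_coord o i t j) (e j).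
Proof.
rewrite /shift_coord /e; case: (j == i).
  by have := dD (@dC R 0 (o j)) (@dI R 0); rewrite add0r.
by have := dD (@dC R 0 (o j)) (@dC R 0 0); rewrite add0r.
Qed.

Lemma dZ : is_derive (0:R) (1:R) Z (expR (o i)).
Proof.
apply: is_derive_eq; first by apply: dsum => k; apply: dexp; apply: dg.
rewrite (_ : (fun k => _) = (fun k => expR (o k) * e k)); first by rewrite sum_e.
by apply/funext => k; rewrite shift0.
Qed.

Lemma dsm j : is_derive (0:R) (1:R) (fun t => softmax (shift_coord o i t) j)
  (softmax o j * (e j - softmax o i)).
Proof.
rewrite /softmax; apply: is_derive_eq.
  apply: dM; first by apply: dexp; apply: dg.
  apply: dV; last exact: dZ.
  by rewrite /Z gt_eqF // Zpos.
rewrite /Z shift0; have := Zpos o; set z := \sum_(k < C) _ => hz.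
have hz' : z != 0 by rewrite gt_eqF.
field; exact hz'.
Qed.

Lemma dlnsm j : is_derive (0:R) (1:R) (fun t => ln (softmax (shift_coord o i t) j))
  (e j - softmax o i).
Proof.
apply: is_derive_eq; first by apply: dln; [exact: softmax_gt0|exact: dsm].
by rewrite /= shift0 mulKf // gt_eqF // softmax_gt0.
Qed.

Lemma lin3 (s b F : 'I_C -> R) (a c d : R) :
  \sum_(k < C) (a * s k + c * (s k * b k) + d * (F k * e k)) =
  a * \sum_(k < C) s k + c * \sum_(k < C) (s k * b k) + d * F i.
Proof. by rewrite !big_split /= -!mulr_sumr sum_e. Qed.

Lemma key (s b : 'I_C -> R) (hs : \sum_(j < C) s j = 1) :
  \sum_(j < C) (s j * (e j - s i) + b j * (s j * (e j - s i))) =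
  1 / 4 * \sum_(j < C) \sum_(k < C)
     (s j * s k * (2 * (b j - b k) * (e j - e k))).
Proof.
set S := \sum_(k < C) (s k * b k).
rewrite (eq_bigr (fun j => (- s i) * s j + (- s i) * (s j * b j)
   + 1 * (((1 + b j) * s j) * e j))); last by move=> j _; ring.
rewrite lin3 hs -/S.
rewrite (eq_bigr (fun j => (2 * s i * b i) * s j + (-2 * s i) * (s j * b j)
   + 1 * ((2 * s j * b j - 2 * s j * S) * e j))); last first.
  move=> j _.
  rewrite (eq_bigr (fun k => (2 * s j * e j * b j) * s k + (-2 * s j * e j) * (s k * b k)
      + (-2 * s j) * ((s k * (b j - b k)) * e k))); last by move=> k _; ring.
  rewrite lin3 hs -/S; ring.
rewrite lin3 hs -/S; by field.
Qed.

Lemma lnsm (p : 'I_C -> R) j :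
  ln (softmax p j) = p j - ln (\sum_(k < C) expR (p k)).
Proof. by rewrite /softmax ln_div ?expRK // posrE ?expR_gt0 ?Zpos. Qed.

Lemma lnsm_div (p q : 'I_C -> R) j :
  ln (softmax p j / softmax q j) = ln (softmax p j) - ln (softmax q j).
Proof. by rewrite ln_div // posrE softmax_gt0. Qed.

Lemma dsqterm j k (c w : R) : is_derive (0:R) (1:R)
  (fun t => w * ((shift_coord o i t j - shift_coord o i t k) - c) ^+ 2)
  (w * (2 * (o j - o k - c) * (e j - e k))).
Proof.
have H := dM (@dC R 0 w) (dsq (dB (dB (dg j) (dg k)) (@dC R 0 c))).
apply: is_derive_eq H _.
by rewrite /= shift0 mulr0 addr0 subr0.
Qed.
End S.
Theorem theorem1 (R : realType) (C : nat) (hC : (2 <= C)%N)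
    (obm obn : 'I_C -> R) (i : 'I_C) :
  (exists d : R,
     is_derive (0 : R) (1 : R) (fun t : R => L_KL (shift_coord obm i t) obn) d /\
     is_derive (0 : R) (1 : R)
       (fun t : R => L_DKL 1 1 obm obn (shift_coord obm i t) obn) d) /\
  (exists d : R,
     is_derive (0 : R) (1 : R) (fun t : R => L_KL obm (shift_coord obn i t)) d /\
     is_derive (0 : R) (1 : R)
       (fun t : R => L_DKL 1 1 obm obn obm (shift_coord obn i t)) d).
Proof.
split.
- eexists; split.
    rewrite /L_KL.
    have -> : (fun t => \sum_(j < C) softmax (shift_coord obm i t) j *
        ln (softmax (shift_coord obm i t) j / softmax obn j)) =
      (fun t => \sum_(j < C) softmax (shift_coord obm i t) j *
        (ln (softmax (shift_coord obm i t) j) - ln (softmax obn j))).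
      by apply/funext => t; apply: eq_bigr => j _; rewrite lnsm_div.
    apply: dsum => j; apply: (dM (dsm _ _ _ _ j)).
    exact: (dB (dlnsm _ _ _ _ j) (dC _ _)).
  have H := dB (dM (@dC R 0 (1/4)) (dsum (fun j => dsum (fun k =>
     dsqterm _ _ obm i j k (obn j - obn k) (softmax obm j * softmax obm k)))))
     (@dC R 0 (1 * \sum_(j < C) softmax obm j * ln (softmax obn j))).
  rewrite /L_DKL; refine (is_derive_eq H _).
  rewrite /= !shift0 !mulr0 !addr0 !subr0.
  under [in RHS]eq_bigr do rewrite subr0.
  rewrite (key _ _ i (softmax obm) (fun j => ln (softmax obm j) - ln (softmax obn j))
     (sum_softmax _ _ i obm)).
  congr (_ * _); apply: eq_bigr => j _; apply: eq_bigr => k _.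
  rewrite !(lnsm _ _ i); ring.
- eexists; split.
    rewrite /L_KL.
    have -> : (fun t => \sum_(j < C) softmax obm j *
        ln (softmax obm j / softmax (shift_coord obn i t) j)) =
      (fun t => \sum_(j < C) softmax obm j *
        (ln (softmax obm j) - ln (softmax (shift_coord obn i t) j))).
      by apply/funext => t; apply: eq_bigr => j _; rewrite lnsm_div.
    apply: dsum => j; apply: (dM (dC _ _)).
    exact: (dB (dC _ _) (dlnsm _ _ _ _ j)).
  have H := dB (@dC R 0 (1 / 4 * \sum_(j < C) \sum_(k < C)
      (softmax obm j * softmax obm k) * ((obm j - obm k) - (obn j - obn k)) ^+ 2))
     (dM (@dC R 0 1) (dsum (fun j => dM (@dC R 0 (softmax obm j)) (dlnsm _ _ obn i j)))).
  rewrite /L_DKL; refine (is_derive_eq H _).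
  rewrite /=.
  rewrite !mulr0 !addr0 mul1r sub0r -sumrN; apply: eq_bigr => j _.
  by rewrite !mulr0 !addr0 sub0r mulrN.
Qed.
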